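(* Let $0<p<\infty$ and $D>0$, and let $\Phi:[0,\infty)\to[0,\infty)$ be such that $t\mapsto\Phi(t^{1/p})$ is a Young function satisfying the $\nabla_2$-condition. Then there does not exist any continuous map $\tau:\mathbb{R}\to\mathbb{R}$ such that \[ |\tau^{-1}(E)|\le\left\{\Phi\left(\frac{1}{D|E|^{1/p}}\right)\right\}^{-1} \] holds for all Lebesgue measurable sets $E\subset\mathbb{R}$.
   Context: $|\cdot|$ denotes Lebesgue measure on $\mathbb{R}$. A Young function is a map $\Psi:[0,\infty)\to[0,\infty)$ that is positive on $(0,\infty)$, convex, with $\lim_{t\downarrow0}\Psi(t)=\Psi(0)=0$. A Young function $\Psi$ satisfies the $\nabla_2$-condition if there is a constant $k>1$ with $\Psi(t)\le\frac{1}{2k}\Psi(kt)$ for all $t>0$. Conventions $1/0=\infty$, $\Phi(\infty)=\infty$, $1/\infty=0$ are used when $|E|\in\{0,\infty\}$. *)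

(* Defs.v *)
From HB Require Import structures.
From mathcomp Require Import all_boot all_order all_algebra.
From mathcomp Require Import all_classical all_reals all_analysis.
Set Implicit Arguments. Unset Strict Implicit. Unset Printing Implicit Defensive.
Import Order.TTheory GRing.Theory Num.Theory.
Import numFieldNormedType.Exports.
Local Open Scope classical_set_scope.
Local Open Scope ring_scope.

Definition young_function (R : realType) (Psi : R -> R) : Prop :=
  [/\ forall t, 0 <= t -> 0 <= Psi t,
      forall t, 0 < t -> 0 < Psi t,
      forall (x y l : R), 0 <= x -> 0 <= y -> 0 <= l -> l <= 1 ->
        Psi (l * x + (1 - l) * y) <= l * Psi x + (1 - l) * Psi y,
      Psi 0 = 0 &
      Psi t @[t --> 0^'+] --> 0].

Definition nabla2 (R : realType) (Psi : R -> R) : Prop :=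
  exists k : R, 1 < k /\ forall t, 0 < t -> Psi t <= (2 * k)^-1 * Psi (k * t).

Definition erecip (R : realType) (v : R) : \bar R :=
  if v == 0 then +oo%E else (v^-1)%:E.

(* The right-hand side  { Phi ( 1 / (D |E|^{1/p}) ) }^{-1}  as a function of
   m = |E| in [0, +oo], with the conventions 1/0 = oo, Phi(oo) = oo, 1/oo = 0:
   - m = 0   : 1/(D*0) = oo, Phi(oo) = oo, 1/oo = 0, so the bound is 0;
   - m = +oo : 1/(D*oo) = 0, so the bound is 1/Phi(0) (= +oo when Phi 0 = 0);
   - 0 < m < oo : the bound is 1/Phi(1/(D m^{1/p})) (with 1/0 = oo). *)
Definition phi_bound (R : realType) (Phi : R -> R) (p D : R) (m : \bar R)
  : \bar R :=
  match m with
  | EFin r => if r == 0 then 0%E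
              else erecip (Phi ((D * r `^ p^-1)^-1))
  | +oo%E => erecip (Phi 0)
  | -oo%E => +oo%E (* impossible for a measure *)
  end.

(* Main.v *)
Require Import Defs.
From HB Require Import structures.
From mathcomp Require Import all_boot all_order all_algebra.
From mathcomp Require Import all_classical all_reals all_analysis.
From mathcomp Require Import ring lra.
Import Order.TTheory GRing.Theory Num.Theory.
Import numFieldNormedType.Exports.
Local Open Scope classical_set_scope.
Local Open Scope ring_scope.

Section Helpers.
Variable R : realType.
Notation cm := (@completed_lebesgue_measure R).

Lemma F1 (a b : R) :
  measurable (`[a, b] : set (caratheodory_type (@completed_lebesgue_measure R))).
Proof. apply: sub_caratheodory. exact: measurable_itv. Qed.

Lemma F2 (a b : R) : a <= b -> cm `[a, b] = (b - a)%:E.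
Proof. move=> ab. have -> : cm `[a, b] = lebesgue_measure `[a, b] by [].
rewrite lebesgue_measure_itv /= lte_fin. case: ltgtP ab => // -> _. by rewrite subrr. Qed.

Lemma F2o (a b : R) : a < b -> cm `]a, b[ = (b - a)%:E.
Proof. move=> ab. have -> : cm `]a, b[ = lebesgue_measure `]a, b[ by [].
by rewrite lebesgue_measure_itv /= lte_fin ab. Qed.

Lemma F3 (A B : set R) : A `<=` B -> (cm A <= cm B)%E.
Proof. move=> AB. rewrite /completed_lebesgue_measure /completed_lebesgue_stieltjes_measure /completed_measure_extension. exact: le_mu_ext. Qed.

Lemma F4 (A B : set R) : (cm (A `|` B) <= cm A + cm B)%E.
Proof. rewrite /completed_lebesgue_measure /completed_lebesgue_stieltjes_measure /completed_measure_extension. exact: outer_measureU2. Qed.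

Lemma powRV_aux (a q : R) : 0 < a -> (a^-1) `^ q = (a `^ q)^-1.
Proof. move=> a0. rewrite /powR invr_eq0 gt_eqF // lnV ?posrE // mulrN expRN. by []. Qed.

Lemma exists_pow2 (x : R) : exists n : nat, x < 2 ^+ n.
Proof.
case: (lerP x 0) => [x0|x0].
  by exists 0%N; rewrite expr0; apply: (le_lt_trans x0); exact: ltr01.
exists (Num.Def.archi_bound x).
apply: (lt_le_trans (archi_boundP (ltW x0))).
rewrite -natrX ler_nat; apply: ltnW; exact: ltn_expl.
Qed.

Lemma ratio (Psi : R -> R) :
  (forall (x y l : R), 0 <= x -> 0 <= y -> 0 <= l -> l <= 1 ->
        Psi (l * x + (1 - l) * y) <= l * Psi x + (1 - l) * Psi y) ->
  Psi 0 = 0 -> forall s u, 0 < s -> s <= u -> Psi s * u <= Psi u * s.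
Proof.
move=> cvx P0 s u s0 su.
have u0 : 0 < u by exact: lt_le_trans su.
have lu : s / u <= 1 by rewrite ler_pdivrMr // mul1r.
have := cvx u 0 (s / u) (ltW u0) (lexx _) (divr_ge0 (ltW s0) (ltW u0)) lu.
rewrite mulr0 addr0 P0 mulr0 addr0 divfK ?gt_eqF // => h.
apply: le_trans (ler_wpM2r (ltW u0) h) _.
rewrite (_ : s / u * Psi u * u = Psi u * s) //. field. by rewrite gt_eqF.
Qed.

Lemma grow (Psi : R -> R) (K : R) : 1 < K ->
  (forall t, 0 < t -> Psi t <= (2 * K)^-1 * Psi (K * t)) ->
  forall n t, 0 < t -> (2 * K) ^+ n * Psi t <= Psi (K ^+ n * t).
Proof.
move=> K1 HK n t t0; elim: n => [|n IH]; first by rewrite !expr0 mul1r mul1r.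
have K0 : 0 < K by exact: lt_trans ltr01 K1.
have := HK (K ^+ n * t) (mulr_gt0 (exprn_gt0 _ K0) t0).
move=> h.
have e : K ^+ n.+1 * t = K * (K ^+ n * t) by rewrite exprS mulrA.
have K20 : 0 <= 2 * K by apply: mulr_ge0 => //; apply: ltW.
rewrite e exprS -mulrA. apply: (le_trans (ler_wpM2l K20 IH)).
have := ler_wpM2l K20 h. rewrite (mulrA (2 * K)) mulfV ?mul1r //.
by rewrite gt_eqF // mulr_gt0.
Qed.

Lemma growth (Psi : R -> R) (K t0 r : R) : 1 < K -> 0 < t0 -> 0 < r ->
  (forall t, 0 < t -> 0 < Psi t) ->
  (forall (x y l : R), 0 <= x -> 0 <= y -> 0 <= l -> l <= 1 ->
        Psi (l * x + (1 - l) * y) <= l * Psi x + (1 - l) * Psi y) ->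
  Psi 0 = 0 ->
  (forall t, 0 < t -> Psi t <= (2 * K)^-1 * Psi (K * t)) ->
  exists k : nat, 2 ^+ k / r < Psi (t0 * 2 ^+ k).
Proof.
move=> K1 t00 r0 Ppos cvx P0 HK.
have K0 : 0 < K by exact: lt_trans ltr01 K1.
have P0t := Ppos _ t00.
have [n hn] := exists_pow2 (r * Psi t0)^-1.
have [j hj] := exists_pow2 K.
exists (j * n)%N.
set a := 2 ^+ n : R. set b := K ^+ n. set c := 2 ^+ (j * n) : R.
have a0 : 0 < a by exact: exprn_gt0.
have b0 : 0 < b by exact: exprn_gt0.
have c0 : 0 < c by exact: exprn_gt0.
have bc : b <= c.
  by rewrite /c exprM; apply: lerXn2r; rewrite ?nnegrE ?ltW.
have u0 : 0 < b * t0 by exact: mulr_gt0.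
have bt : b * t0 <= t0 * c by rewrite mulrC ler_pM2l.
have hr := @ratio Psi cvx P0 _ _ u0 bt.
have hg := @grow Psi K K1 HK n t0 t00.
rewrite -/b exprMn -/a in hg.
set Q := Psi (b * t0) in hr hg. set S := Psi (t0 * c) in hr *.
have h1 : 1 < a * (r * Psi t0).
  by rewrite -ltr_pdivrMr ?mulr_gt0 // mul1r.
have h2 : a * Psi t0 * c <= S.
  have : Q * (t0 * c) <= S * (b * t0) := hr.
  have : a * b * Psi t0 <= Q := hg.
  move=> h3 h4.
  have h5 : a * b * Psi t0 * (t0 * c) <= S * (b * t0).
    apply: le_trans h4; apply: ler_wpM2r => //; exact: ltW (mulr_gt0 t00 c0).
  have e : a * b * Psi t0 * (t0 * c) = (a * Psi t0 * c) * (b * t0) by ring.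
  by rewrite e ler_pM2r in h5.
apply: lt_le_trans h2.
rewrite ltr_pdivrMr //.
have e : a * Psi t0 * c * r = c * (a * (r * Psi t0)) by ring.
by rewrite e ltr_pMr.
Qed.

End Helpers.

Theorem proposition5p2 (R : realType) (p D : R) (Phi : R -> R) :
  0 < p -> 0 < D ->
  (forall t, 0 <= t -> 0 <= Phi t) ->
  young_function (fun t => Phi (t `^ p^-1)) ->
  nabla2 (fun t => Phi (t `^ p^-1)) ->
  ~ exists tau : R -> R, continuous tau /\
      forall E : set R, measurable (E : set (caratheodory_type
                                     (@completed_lebesgue_measure R))) ->
        (@completed_lebesgue_measure R (tau @^-1` E)
          <= phi_bound Phi p D (@completed_lebesgue_measure R E))%E.
Proof.
move=> p0 D0 Phi0 [Y1 Y2 Y3 Y4 Y5] [K [K1 HK]] [tau [tauc Hb]].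
set cm := @completed_lebesgue_measure R.
have := @cvgr_dist_lt _ _ _ _ _ tau (tau 0) (tauc 0) 1 ltr01.
move=> Hn; have {}Hn := Hn ltac:(typeclasses eauto); have [r /= r0 Hr] := (nbhs_ballP _ _).1 Hn.
set y0 := tau 0.
have base : (r%:E <= cm (tau @^-1` `[(y0 - 1)%R, (y0 + 1)%R]))%E.
  have sub : `](0:R) - r, 0 + r[ `<=` tau @^-1` `[y0 - 1, y0 + 1].
    move=> x; rewrite -ball_itv => /Hr.
    rewrite /= ltr_distlC => /andP [h1 h2].
    by rewrite /= in_itv /= (ltW h1) (ltW h2).
  apply: le_trans (@F3 R _ _ sub).
  rewrite F2o; last by rewrite ltrD2l gtrN.
  by rewrite lee_fin; rewrite add0r sub0r opprK lerDl ltW.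
have halv : forall k : nat, exists a : R,
    (((r / 2 ^+ k)%R)%:E <= cm (tau @^-1` `[a, (a + 2 / 2 ^+ k)%R]))%E.
  elim=> [|k [a IH]].
    exists (y0 - 1); rewrite expr0 !divr1.
    by rewrite (_ : y0 - 1 + 2 = y0 + 1) //; ring.
  set h := 2 / 2 ^+ k.+1.
  have e1 : a + 2 / 2 ^+ k = a + h + h by rewrite /h exprS; field.
  have e2 : r / 2 ^+ k = r / 2 ^+ k.+1 + r / 2 ^+ k.+1 by rewrite exprS; field.
  have h0 : 0 < h by rewrite /h divr_gt0 // exprn_gt0.
  have sub : tau @^-1` `[a, a + 2 / 2 ^+ k] `<=`
      tau @^-1` `[a, a + h] `|` tau @^-1` `[a + h, a + h + h].
    move=> x; rewrite e1 /= !in_itv /= => /andP [l1 l2].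
    case: (lerP (tau x) (a + h)) => l3; [left|right].
    by rewrite l1.
    by rewrite (ltW l3) l2.
  have := le_trans IH (le_trans (@F3 R _ _ sub) (@F4 R _ _)).
  case: (leP (((r / 2 ^+ k.+1)%R)%:E) (cm (tau @^-1` `[a, (a + h)%R]))) => [H1|H1].
    by move=> _; exists a.
  case: (leP (((r / 2 ^+ k.+1)%R)%:E) (cm (tau @^-1` `[(a + h)%R, (a + h + h)%R]))) => [H2|H2].
    by move=> _; exists (a + h).
  move=> H. have := lteD H1 H2. rewrite -EFinD -e2 => H3.
  by have := lt_le_trans H3 H; rewrite ltxx.
pose t0 : R := (2 * D `^ p)^-1.
have Dp : 0 < D `^ p := powR_gt0 _ D0.
have t00 : 0 < t0 by rewrite /t0 invr_gt0 mulr_gt0.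
have [k hk] := @growth R (fun t => Phi (t `^ p^-1)) K t0 r K1 t00 r0 Y2 Y3 Y4 HK.
have [a ha] := halv k.
set m := (2 / 2 ^+ k)%R in ha.
have c0 : 0 < 2 ^+ k :> R by rewrite exprn_gt0.
have m0 : 0 < m by rewrite divr_gt0.
have := Hb _ (@F1 R a (a + m)).
rewrite F2; last by rewrite lerDl ltW.
rewrite (_ : (a + m - a)%R = m); last by ring.
rewrite /phi_bound (gt_eqF m0).
set x := (D * m `^ p^-1)^-1.
have mp : 0 < m `^ p^-1 by rewrite powR_gt0.
have x0 : 0 < x by rewrite /x invr_gt0 mulr_gt0.
have xp : x `^ p = t0 * 2 ^+ k.
  rewrite /x powRV_aux; last by rewrite mulr_gt0.
  rewrite powRM ?powR_ge0 ?ltW // -powRrM mulVf ?gt_eqF // powRr1 ?ltW //.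
  rewrite /t0 /m; field.
  by rewrite gt_eqF // gt_eqF.
have ex : Phi x = Phi ((t0 * 2 ^+ k) `^ p^-1).
  by rewrite -xp -powRrM mulfV ?gt_eqF // powRr1 // ltW.
have Ppos : 0 < Phi x.
  rewrite ex; apply: lt_trans hk; by rewrite divr_gt0.
rewrite /erecip (gt_eqF Ppos) => h.
have {h} h := le_trans ha h.
rewrite lee_fin in h.
rewrite -ex ltr_pdivrMr // in hk.
have := ler_wpM2l (ltW Ppos) h.
rewrite mulfV ?gt_eqF // mulrA ler_pdivrMr // mul1r => h2.
by have := lt_le_trans hk h2; rewrite ltxx.
Qed.
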